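(* For every class $\mathcal{G}$ of graphs of bounded shrub-depth and every positive integer $r$, there exists a positive integer $c$ such that every graph in $\mathcal{G}$ has a weak $r$-guidance system of maximum outdegree at most $c$.
   Context: All graphs are finite, simple and undirected. A partial orientation of $G$ is a directed graph $\vec{H}$ on $V(G)$ such that every $(u,v)\in E(\vec{H})$ satisfies $uv\in E(G)$ (each edge of $G$ may be directed in neither, one, or both directions). $B_{\vec{H}}(v,a)$ denotes the set of vertices reachable from $v$ by a directed path in $\vec{H}$ of length at most $a$. A weak $r$-guidance system of $G$ is a partial orientation $\vec{H}$ such that for any distinct vertices $u,v$ at distance $\ell\le r$ in $G$ there exist non-negative integers $a,b$ with $a+b=\ell-1$ such that $G$ contains an edge between $B_{\vec{H}}(u,a)$ and $B_{\vec{H}}(v,b)$. Shrub-depth: for a positive integer $m$, an $m$-signature is a function $S$ assigning to each positive integer $i$ a symmetric relation $S(i)\subseteq[m]\times[m]$. For a positive integer $d$, an $(m,d)$-tree model of a graph $G$ is a triple $(T,\varphi,S)$ where $T$ is a rooted tree with leaf set $V(G)$ in which every root-leaf path has length $d$, $\varphi:V(G)\to[m]$, $S$ is an $m$-signature, and for all $u,v\in V(G)$, if $2i$ is the distance between $u$ and $v$ in $T$ then $uv\in E(G)$ iff $(\varphi(u),\varphi(v))\in S(i)$. A class has shrub-depth at most $d$ if for some positive integer $m$ every graph in the class has an $(m,d)$-tree model; it has bounded shrub-depth if it has shrub-depth at most $d$ for some $d$. *)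

(* Defs.v *)
From mathcomp Require Import all_boot.
Set Implicit Arguments. Unset Strict Implicit. Unset Printing Implicit Defensive.

Record graph := Graph {
  gV :> finType;
  gadj : rel gV;
  gadj_sym : symmetric gadj;
  gadj_irr : irreflexive gadj }.

(* A rooted tree T with leaf set V(G) in which every root-leaf path has
   length d is encoded by node labels per level: node of level k (0 <= k <= d)
   above leaf u is (k, lab k u).  Level 0 = root, level d = the leaves. *)
Definition depth_d_tree (G : graph) (d : nat) (lab : nat -> G -> nat) : Prop :=
  (forall u v : G, lab 0 u = lab 0 v) /\                       (* single root *)
  (forall k, k < d -> forall u v : G,
       lab k.+1 u = lab k.+1 v -> lab k u = lab k v) /\        (* unique parents *)
  (forall u v : G, lab d u = lab d v -> u = v).                (* leaves = V(G) *)

(* Half of the distance in T between leaves u and v: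
   d minus the level of their lowest common ancestor. *)
Definition half_tdist (G : graph) (d : nat) (lab : nat -> G -> nat) (u v : G) : nat :=
  d - \max_(k < d.+1 | lab k u == lab k v) k.

Definition is_tree_model (G : graph) (m d : nat) (lab : nat -> G -> nat)
    (phi : G -> 'I_m) (S : nat -> rel 'I_m) : Prop :=
  @depth_d_tree G d lab /\
  (forall i, symmetric (S i)) /\
  (forall u v : G, u != v ->
     @gadj G u v = S (@half_tdist G d lab u v) (phi u) (phi v)).

Definition has_tree_model (m d : nat) (G : graph) : Prop :=
  exists lab phi S, @is_tree_model G m d lab phi S.

Definition shrub_depth_at_most (C : graph -> Prop) (d : nat) : Prop :=
  exists m, 0 < m /\ forall G, C G -> has_tree_model m d G.

Definition bounded_shrub_depth (C : graph -> Prop) : Prop :=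
  exists d, 0 < d /\ shrub_depth_at_most C d.

Definition partial_orientation (G : graph) (H : rel G) : Prop :=
  forall u v : G, H u v -> @gadj G u v.

Definition in_ball (G : graph) (H : rel G) (v : G) (a : nat) (w : G) : Prop :=
  exists p : seq G, size p <= a /\ path H v p /\ last v p = w.

Definition gdist_le (G : graph) (u v : G) (l : nat) : Prop :=
  exists p : seq G, size p <= l /\ path (@gadj G) u p /\ last u p = v.

Definition gdist_eq (G : graph) (u v : G) (l : nat) : Prop :=
  gdist_le u v l /\ forall l', gdist_le u v l' -> l <= l'.

Definition weak_guidance_system (G : graph) (r : nat) (H : rel G) : Prop :=
  partial_orientation H /\
  forall (u v : G) (l : nat), u != v -> l <= r -> gdist_eq u v l ->
    exists a b : nat, a + b = l.-1 /\
      exists x y : G, in_ball H u a x /\ in_ball H v b y /\ @gadj G x y.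

Definition max_outdeg_le (G : graph) (H : rel G) (c : nat) : Prop :=
  forall u : G, #|[set v | H u v]| <= c.

(* Main.v *)
Require Import Defs.
From mathcomp Require Import all_boot zify.
Set Implicit Arguments. Unset Strict Implicit. Unset Printing Implicit Defensive.

Fixpoint Ty (m K n : nat) : finType :=
  match n with 0 => 'I_m | n'.+1 => {ffun Ty m K n' -> 'I_K.+1} : finType end.

Section Model.
Variable G : graph.
Variables (d m K : nat) (lab : nat -> G -> nat) (phi : G -> 'I_m) (S : nat -> rel 'I_m).
Hypothesis TM : @is_tree_model G m d lab phi S.
Hypothesis K1 : 0 < K.

Lemma lab0 (u w : G) : lab 0 u = lab 0 w.
Proof. by case: TM => [[H _] _]. Qed.

Lemma labd (u w : G) : lab d u = lab d w -> u = w.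
Proof. by case: TM => [[_ [_ H]] _]; apply: H. Qed.

Lemma lab_par k (u w : G) : k < d -> lab k.+1 u = lab k.+1 w -> lab k u = lab k w.
Proof. by case: TM => [[_ [H _]] _] hk /(H k hk). Qed.

Lemma lab_down i j (u w : G) : i <= j -> j <= d -> lab j u = lab j w -> lab i u = lab i w.
Proof.
elim: j => [|j IH]; first by rewrite leqn0 => /eqP ->.
rewrite leq_eqVlt => /orP [/eqP -> //|]; rewrite ltnS => hij hj hl.
apply: IH => //; first by apply: ltnW.
by apply: lab_par.
Qed.

Definition lev (u w : G) : nat := \max_(k < d.+1 | lab k u == lab k w) k.

Lemma lev_le (u w : G) : lev u w <= d.
Proof. by apply/bigmax_leqP => i _; rewrite -ltnS. Qed.

Lemma levP (u w : G) k : k <= d -> (k <= lev u w) = (lab k u == lab k w).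
Proof.
move=> hk; apply/idP/idP.
- have : 0 < #|[pred i : 'I_d.+1 | lab i u == lab i w]|.
    apply/card_gt0P; exists ord0; by rewrite inE /= (lab0 u w).
  move=> /(eq_bigmax_cond (fun i : 'I_d.+1 => nat_of_ord i)) [i0 hi0 he].
  rewrite /lev he => hki; apply/eqP.
  apply: (lab_down hki); first by rewrite -ltnS.
  by move: hi0; rewrite inE => /eqP.
- move=> /eqP he.
  have := @leq_bigmax_cond _ (fun i : 'I_d.+1 => lab i u == lab i w) (fun i : 'I_d.+1 => nat_of_ord i) (Ordinal (hk : k < d.+1)).
  by rewrite /= he eqxx => /(_ isT).
Qed.

Lemma lev_geP (u w : G) k : k <= d -> k <= lev u w -> lab k u = lab k w.
Proof. by move=> hk; rewrite levP // => /eqP. Qed.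

Lemma lev_sym (u w : G) : lev u w = lev w u.
Proof. by apply: eq_bigl => i; rewrite eq_sym. Qed.

Lemma lev_refl (u : G) : lev u u = d.
Proof. by apply/eqP; rewrite eqn_leq lev_le /= (levP u u (leqnn d)). Qed.

Lemma lev_d (u w : G) : lev u w = d -> u = w.
Proof. by move=> h; apply: labd; apply: lev_geP => //; rewrite h. Qed.

Lemma lev_neq (u w : G) : u != w -> lev u w < d.
Proof.
move=> h; rewrite ltn_neqAle lev_le andbT; apply/eqP => /lev_d he.
by rewrite he eqxx in h.
Qed.

Lemma adjE (u w : G) : u != w -> gadj u w = S (d - lev u w) (phi u) (phi w).
Proof. by case: TM => [_ [_ H]] /H. Qed.

Lemma lev_ge (u w : G) k : k <= d -> lab k u = lab k w -> k <= lev u w.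
Proof. by move=> hk he; rewrite levP // he. Qed.


Fixpoint tyn (n : nat) : G -> Ty m K n :=
  match n return G -> Ty m K n with
  | 0 => fun w => phi w
  | n'.+1 => fun w => [ffun t : Ty m K n' => inord (minn K (size (undup
       [seq lab (d - n') z | z <- enum G & (lab (d - n'.+1) z == lab (d - n'.+1) w) && (tyn n' z == t)])))]
  end.

Definition sib (n : nat) (w : G) (t : Ty m K n) : seq nat :=
  undup [seq lab (d - n) z | z <- enum G & (lab (d - n.+1) z == lab (d - n.+1) w) && (tyn n z == t)].

Lemma tynS n w (t : Ty m K n) : tyn n.+1 w t = inord (minn K (size (sib w t))).
Proof. by rewrite /= ffunE. Qed.

Lemma tynS_val n w (t : Ty m K n) : (tyn n.+1 w t : nat) = minn K (size (sib w t)).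
Proof. by rewrite tynS inordK // ltnS geq_minl. Qed.

Lemma sib_cls n (u w : G) (t : Ty m K n) : lab (d - n.+1) u = lab (d - n.+1) w -> sib u t = sib w t.
Proof. by move=> h; rewrite /sib h. Qed.

Lemma tyn_cls n (u w : G) : n <= d -> lab (d - n) u = lab (d - n) w -> tyn n u = tyn n w.
Proof.
case: n => [|n] hn h; first by rewrite subn0 in h; rewrite (labd h).
by apply/ffunP => t; rewrite !tynS (sib_cls t h).
Qed.

Lemma mem_sib n (z w : G) (t : Ty m K n) : lab (d - n.+1) z = lab (d - n.+1) w -> tyn n z = t ->
  lab (d - n) z \in sib w t.
Proof.
move=> h1 h2; rewrite /sib mem_undup; apply/mapP; exists z => //.
by rewrite mem_filter h1 h2 !eqxx mem_enum.
Qed.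

Lemma sibP n (w : G) (t : Ty m K n) l : l \in sib w t ->
  exists z, [/\ lab (d - n.+1) z = lab (d - n.+1) w, tyn n z = t & lab (d - n) z = l].
Proof.
rewrite /sib mem_undup => /mapP [z]; rewrite mem_filter => /andP [/andP [/eqP h1 /eqP h2] _] ->.
by exists z.
Qed.

Definition isrep (j : nat) (z : G) : bool :=
  index (lab j z) (sib z (tyn (d - j) z)) < K.

Lemma isrep_cls j (u w : G) : 0 < j -> j <= d -> lab j u = lab j w -> isrep j u = isrep j w.
Proof.
move=> h0 hj h; rewrite /isrep.
have ht : tyn (d - j) u = tyn (d - j) w by apply: tyn_cls; [rewrite leq_subr | rewrite subKn].
rewrite ht h; congr (_ < _); congr index; apply: sib_cls.
apply: (lab_down (j := j)) => //; lia.
Qed.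

Definition RA (g : nat) (z : G) := forall i, g < i -> i <= d -> isrep i z.

Lemma descent n : n <= d -> forall w y : G, tyn n w = tyn n y ->
  exists z, [/\ lab (d - n) z = lab (d - n) w,
     (forall n', n' <= n -> tyn n' z = tyn n' y) & RA (d - n) z].
Proof.
elim: n => [|n IH] hn w y hwy.
  exists w; split => //; last by move=> i; lia.
  by move=> n'; rewrite leqn0 => /eqP ->.
set t := tyn n y.
have hy : lab (d - n) y \in sib y t by apply: mem_sib.
have hsz : 0 < size (sib w t).
  have := congr1 (fun f : Ty m K n.+1 => (f t : nat)) hwy.
  rewrite /= !tynS_val => he.
  have : 0 < minn K (size (sib y t)) by rewrite leq_min K1 /=; case: (sib y t) hy.
  by rewrite -he leq_min => /andP [].
case E : (sib w t) hsz => [//|l0 s] _.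
have : l0 \in sib w t by rewrite E mem_head.
move=> /sibP [w' [h1 h2 h3]].
have [z [hz1 hz2 hz3]] := IH (ltnW hn) w' y h2.
have hzw' : lab (d - n.+1) z = lab (d - n.+1) w'.
  by apply: (lab_down (j := d - n)) => //; lia.
exists z; split.
- by rewrite hzw' h1.
- move=> n'; rewrite leq_eqVlt => /orP [/eqP -> | ]; last by rewrite ltnS; apply: hz2.
  by rewrite (tyn_cls (w := w)) // hzw' h1.
- move=> i hi hid.
  have [hlt|hge] := ltnP (d - n) i; first by apply: hz3.
  have -> : i = d - n by lia.
  rewrite (isrep_cls (w := w')) //; try lia.
  rewrite /isrep.
  have -> : d - (d - n) = n by lia.
  by rewrite h2 (sib_cls t h1) E h3 /= eqxx.
Qed.

Lemma lev_close (a b c : G) L : L <= d -> lab L a = lab L b -> lev b c < L -> lev a c = lev b c.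
Proof.
move=> hL hab hlt; set mu := lev b c in hlt *.
have hmu : mu <= d by apply: lev_le.
apply/eqP; rewrite eqn_leq; apply/andP; split.
- rewrite leqNgt; apply/negP => h.
  have h1 : mu.+1 <= d by lia.
  have e1 := lev_geP h1 h.
  have e2 : lab mu.+1 a = lab mu.+1 b by apply: (lab_down (j := L)).
  have := lev_ge h1 (etrans (esym e2) e1); rewrite /mu; lia.
- apply: lev_ge => //.
  rewrite (lab_down (j := L) (w := b)) //; first by apply: lev_geP.
  by apply: ltnW.
Qed.

Lemma lev_split (a c : G) L : L < d -> lab L a = lab L c -> lab L.+1 a != lab L.+1 c -> lev a c = L.
Proof.
move=> hL h1 h2; apply/eqP; rewrite eqn_leq; apply/andP; split.
- rewrite leqNgt; apply/negP => h; move/negP: h2; apply; apply/eqP; exact: lev_geP.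
- by apply: lev_ge => //; apply: ltnW.
Qed.

Lemma seq_argmax (s : seq nat) (f : nat -> nat) : s != [::] ->
  exists2 x, x \in s & forall y, y \in s -> f y <= f x.
Proof.
elim: s => [//|a s IH] _.
case: s IH => [|b s] IH.
  by exists a => [|y]; rewrite ?mem_head // inE => /eqP ->.
have [x hx hm] := IH isT.
have [le|lt] := leqP (f a) (f x).
  exists x; first by rewrite inE hx orbT.
  by move=> y; rewrite inE => /orP [/eqP -> //|]; apply: hm.
exists a; first by rewrite mem_head.
move=> y; rewrite inE => /orP [/eqP -> //|/hm h]; lia.
Qed.

Lemma size_undup_ker (T1 T2 : eqType) (s : seq nat) (f1 : nat -> T1) (f2 : nat -> T2) :
  {in s &, forall a b, (f1 a == f1 b) = (f2 a == f2 b)} ->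
  size (undup (map f1 s)) = size (undup (map f2 s)).
Proof.
elim: s => [//|a s IH] hk /=.
have hk' : {in s &, forall a b, (f1 a == f1 b) = (f2 a == f2 b)}.
  by move=> x y hx hy; apply: hk; rewrite inE ?hx ?hy orbT.
have -> : (f1 a \in map f1 s) = (f2 a \in map f2 s).
  apply/mapP/mapP => [] [b hb he]; exists b => //; apply/eqP.
  - by rewrite -(hk a b) ?mem_head ?inE ?hb ?orbT // he.
  - by rewrite (hk a b) ?mem_head ?inE ?hb ?orbT // he.
by case: (f2 a \in map f2 s) => /=; rewrite IH.
Qed.

Lemma extend (P F : nat -> G) (X : seq nat) (y : nat) (g : nat) :
  X != [::] -> size X < K ->
  (forall a b, a \in X -> b \in X -> lev (F a) (F b) = lev (P a) (P b)) ->
  (forall a n, a \in X -> n <= d -> tyn n (F a) = tyn n (P a)) ->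
  (forall b, b \in X -> lev (P y) (P b) <= g \/ RA g (F b)) ->
  exists z, [/\ forall b, b \in X -> lev z (F b) = lev (P y) (P b),
     forall n, n <= d -> tyn n z = tyn n (P y) & RA g z].
Proof.
move=> hX hXK I1 I2 hg.
have [b0 hb0 hmax] := seq_argmax (fun b => lev (P y) (P b)) hX.
set L := lev (P y) (P b0) in hmax.
have hLd : L <= d by apply: lev_le.
have [hLe|hLlt] := eqVneq L d.
  have ey : P y = P b0 by apply: lev_d.
  exists (F b0); split.
  - by move=> b hb; rewrite I1 // ey.
  - by move=> n hn; rewrite I2 // ey.
  - case: (hg b0 hb0) => // h i hi hid; rewrite -/L hLe in h; lia.
have hL : L < d by rewrite ltn_neqAle hLlt hLd.
set n0 := d - L.+1.
have e1 : d - n0 = L.+1 by rewrite /n0; lia.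
have e2 : d - n0.+1 = L by rewrite /n0; lia.
set t := tyn n0 (P y).
set Sf := sib (F b0) t.
set SP := sib (P b0) t.
set pr := fun (Q : nat -> G) b => (lab L (Q b) == lab L (Q b0)) && (tyn n0 (Q b) == t).
set I := [seq lab L.+1 (F b) | b <- X & pr F b].
set IP := [seq lab L.+1 (P b) | b <- X & pr P b].
have hyb0 : lab L (P y) = lab L (P b0) by apply: lev_geP.
have hpr : {in X, pr F =1 pr P}.
  move=> b hb; rewrite /pr I2 //; last by rewrite /n0 leq_subr.
  congr (_ && _); rewrite -!levP // I1 //.
have hsz1 : size (undup I) = size (undup IP).
  rewrite /I /IP -(eq_in_filter hpr); apply: size_undup_ker.
  move=> a b; rewrite !mem_filter => /andP [_ ha] /andP [_ hb].
  by rewrite -!levP // I1.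
have hnotin : lab L.+1 (P y) \notin IP.
  apply/negP => /mapP [b]; rewrite mem_filter => /andP [_ hb] he.
  have h1 := hmax b hb; have h2 := lev_ge hL he; simpl in h1; lia.
have hsz2 : size (undup IP) < size SP.
  have hu : uniq (lab L.+1 (P y) :: undup IP) by rewrite /= mem_undup hnotin undup_uniq.
  have := uniq_leq_size hu; rewrite /=; apply.
  move=> l; rewrite inE mem_undup => /orP [/eqP -> | /mapP [b]].
  - by rewrite -e1; apply: mem_sib => //; rewrite e2.
  - rewrite mem_filter => /andP [/andP [/eqP h1 /eqP h2] _] ->.
    by rewrite -e1; apply: mem_sib => //; rewrite e2.
have hsz3 : minn K (size Sf) = minn K (size SP).
  have := I2 b0 n0.+1 hb0; rewrite /n0; move=> /(_ ltac:(lia)) => h.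
  by have := congr1 (fun f : Ty m K n0.+1 => (f t : nat)) h; rewrite !tynS_val.
have hsz4 : size (undup I) < size (take K Sf).
  rewrite size_take_min hsz3 leq_min hsz1 hsz2 andbT -hsz1.
  apply: leq_ltn_trans hXK; apply: leq_trans (size_undup _) _.
  by rewrite size_map size_filter count_size.
case: (boolP (all (fun l => l \in I) (take K Sf))) => [/allP hall | /allPn [l hl hnl]].
  have hu : uniq (take K Sf) by apply: take_uniq; apply: undup_uniq.
  have := uniq_leq_size hu (s2 := undup I).
  have : {subset take K Sf <= undup I} by move=> x hx; rewrite mem_undup; apply: hall.
  move=> hs /(_ hs) h; by have := leq_ltn_trans h hsz4; rewrite ltnn.
have hlS : l \in Sf by apply: mem_take hl.
have [w [hw1 hw2 hw3]] := sibP hlS.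
rewrite e2 in hw1; rewrite e1 in hw3.
have hwrep : isrep L.+1 w.
  rewrite /isrep.
  have -> : d - L.+1 = n0 by [].
  rewrite hw2 hw3 -/Sf.
  have -> : sib w t = Sf by apply: sib_cls; rewrite e2.
  exact: index_ltn hl.
have [z [hz1 hz2 hz3]] := descent (leq_subr _ _ : n0 <= d) hw2.
rewrite e1 in hz1 hz3.
have hzb0 : lab L z = lab L (F b0).
  by rewrite -hw1; apply: (lab_down (j := L.+1)).
have hzL : forall k, k <= L -> lab k z = lab k (F b0).
  by move=> k hk; apply: (lab_down (j := L)) => //; lia.
have hnot : forall b, b \in X -> lab L (F b) = lab L (F b0) -> lab L.+1 z != lab L.+1 (F b).
  move=> b hb hbL; apply/negP => /eqP he.
  have htb : tyn n0 (F b) = t.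
    by rewrite -hw2 -(tyn_cls (u := z)) ?leq_subr // ?e1 // (tyn_cls (u := z) (w := w)) ?leq_subr // e1 hz1.
  move/negP: hnl; apply; apply/mapP; exists b; last by rewrite -he hz1.
  by rewrite mem_filter hb /pr hbL htb !eqxx.
exists z; split.
- move=> b hb; set mu := lev (P b0) (P b).
  have hmuF : lev (F b0) (F b) = mu by rewrite I1.
  have [hge|hlt] := leqP L mu.
  + have hFb : lab L (F b) = lab L (F b0).
      by apply/esym/lev_geP => //; rewrite hmuF.
    have hPb : lab L (P b) = lab L (P b0) by apply/esym/lev_geP.
    rewrite (lev_split hL (etrans hzb0 (esym hFb)) (hnot b hb hFb)).
    apply/esym/lev_split => //; first by rewrite hyb0 hPb.
    apply/negP => /eqP he; have h1 := hmax b hb; have h2 := lev_ge hL he; simpl in h1; lia.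
  + rewrite (lev_close hLd hzb0) ?hmuF //.
    by rewrite (lev_close hLd hyb0).
- move=> n hn; have [hle|hgt] := leqP n n0; first by apply: hz2.
  have hk : d - n <= L by rewrite /n0 in hgt; lia.
  rewrite (tyn_cls (w := F b0)) //; last by apply: hzL.
  rewrite I2 //; apply: tyn_cls => //; apply: (lab_down (j := L)) => //.
- move=> i hi hid.
  have [hlt|hge] := ltnP L.+1 i; first by apply: hz3.
  rewrite leq_eqVlt in hge; case/orP: hge => [/eqP ei|hle].
    by rewrite ei (isrep_cls (w := w)) // hz1.
  rewrite ltnS in hle.
  have hFr : RA g (F b0).
    by case: (hg b0 hb0) => // h; rewrite -/L in h; lia.
  rewrite (isrep_cls (w := F b0)) //; first by apply: hFr.
  + by lia.
  + by apply: hzL.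
Qed.

Definition I1 (P F : nat -> G) (X : seq nat) :=
  forall a b, a \in X -> b \in X -> lev (F a) (F b) = lev (P a) (P b).
Definition I2 (P F : nat -> G) (X : seq nat) :=
  forall a n, a \in X -> n <= d -> tyn n (F a) = tyn n (P a).

Lemma place_all (P : nat -> G) (g : nat) (Y : seq nat) : forall (X : seq nat) (F : nat -> G),
  X != [::] -> uniq (X ++ Y) -> size (X ++ Y) <= K ->
  I1 P F X -> I2 P F X ->
  (forall b y, b \in X -> y \in Y -> lev (P y) (P b) <= g \/ RA g (F b)) ->
  exists F', [/\ forall b, b \in X -> F' b = F b,
     I1 P F' (X ++ Y), I2 P F' (X ++ Y) & forall y, y \in Y -> RA g (F' y)].
Proof.
elim: Y => [|y Y IH] X F hX hu hs h1 h2 hg.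
  by exists F; rewrite cats0; split.
have hXK : size X < K by move: hs; rewrite size_cat /=; lia.
have [z [hz1 hz2 hz3]] := extend hX hXK h1 h2 (fun b hb => hg b y hb (mem_head _ _)).
have hyX : y \notin X.
  by move: hu; rewrite cat_uniq /= => /and4P [_ /norP [] ].
set F1 := fun t => if t == y then z else F t.
have hF1 : forall b, b \in X -> F1 b = F b.
  by move=> b hb; rewrite /F1; case: eqP => // e; rewrite -e hb in hyX.
have hX1 : rcons X y != [::] by case: (X).
have hF1y : F1 y = z by rewrite /F1 eqxx.
have [F' [hF'1 hF'2 hF'3 hF'4]] : exists F', [/\ forall b, b \in rcons X y -> F' b = F1 b,
     I1 P F' (rcons X y ++ Y), I2 P F' (rcons X y ++ Y) & forall y, y \in Y -> RA g (F' y)].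
  apply: IH => //; rewrite ?cat_rcons //.
  - move=> a b; rewrite !mem_rcons !inE => /orP [/eqP -> | ha] /orP [/eqP -> | hb].
    + by rewrite hF1y !lev_refl.
    + by rewrite hF1y hF1 // hz1.
    + by rewrite hF1y hF1 // lev_sym hz1 // lev_sym.
    + by rewrite !hF1 // h1.
  - move=> a n; rewrite mem_rcons inE => /orP [/eqP -> | ha] hn.
    + by rewrite hF1y hz2.
    + by rewrite hF1 // h2.
  - move=> b y'; rewrite mem_rcons inE => /orP [/eqP -> | hb] hy'.
    + by right; rewrite hF1y.
    + by rewrite hF1 //; apply: hg => //; rewrite inE hy' orbT.
exists F'; split.
- by move=> b hb; rewrite hF'1 ?mem_rcons ?inE ?hb ?orbT // hF1.
- by rewrite -cat_rcons.
- by rewrite -cat_rcons.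
- move=> y'; rewrite inE => /orP [/eqP -> | hy']; last by apply: hF'4.
  by rewrite hF'1 ?mem_rcons ?mem_head // hF1y.
Qed.

Definition Inv (q0 q : nat -> G) (l : nat) :=
  [/\ q 0 = q0 0, q l = q0 l, forall t, t < l -> lev (q t) (q t.+1) = lev (q0 t) (q0 t.+1)
    & forall t, t <= l -> phi (q t) = phi (q0 t)].

Lemma chain (q : nat -> G) g i j : g < d ->
  (forall s, i <= s -> s < j -> g < lev (q s) (q s.+1)) ->
  forall t, i <= t -> t <= j -> lab g.+1 (q t) = lab g.+1 (q i).
Proof.
move=> hg hs; elim => [|t IH] hi hj.
  by have -> : i = 0 by lia.
have [e|hlt] := eqVneq i t.+1; first by rewrite e.
have hit : i <= t by lia.
rewrite -(IH hit (ltnW hj)); apply/esym/lev_geP => //.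
by apply: hs => //.
Qed.

Lemma seg_raise (q0 q : nat -> G) l i j g : l < K -> Inv q0 q l -> 0 < i -> i <= j -> j < l ->
  lev (q i.-1) (q i) <= g -> lev (q j) (q j.+1) <= g ->
  (forall s, i <= s -> s < j -> g < lev (q s) (q s.+1)) ->
  exists q', [/\ Inv q0 q' l, forall t, t < i \/ j < t -> q' t = q t
     & forall t, i <= t -> t <= j -> RA g (q' t)].
Proof.
move=> hlK [hq0 hql hqlev hqphi] hi hij hjl hgi hgj hs.
set X0 := [:: i.-1; j.+1].
set Y := iota i (j - i).+1.
have hmem : forall t, (t \in X0 ++ Y) = (i.-1 <= t <= j.+1).
  move=> t; rewrite mem_cat !inE mem_iota.
  apply/idP/idP; lia.
have hgY : forall b y, b \in X0 -> y \in Y -> lev (q y) (q b) <= g \/ RA g (q b).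
  move=> b y hb; rewrite mem_iota => hy; left.
  have [hdg|hgd] := leqP d g; first by apply: leq_trans (lev_le _ _) hdg.
  have hc := chain hgd hs (t := y) ltac:(lia) ltac:(lia).
  rewrite leqNgt; apply/negP => hlt.
  have e := lev_geP hgd hlt.
  move: hb; rewrite !inE => /orP [/eqP eb | /eqP eb]; rewrite eb in e.
  - have : g < lev (q i.-1) (q i).
      apply: lev_ge => //; rewrite -e hc //.
    lia.
  - have hcj := chain hgd hs (t := j) ltac:(lia) ltac:(lia).
    have : g < lev (q j) (q j.+1).
      by apply: lev_ge => //; rewrite hcj -hc.
    lia.
have hu : uniq (X0 ++ Y).
  rewrite cat_uniq iota_uniq andbT; apply/andP; split.
    by rewrite /X0 /= inE andbT; apply/eqP; lia.
  by apply/hasPn => t; rewrite mem_iota => ht; rewrite !inE; lia.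
have hsz : size (X0 ++ Y) <= K by rewrite size_cat size_iota /=; lia.
have [F' [hF1 hF2 hF3 hF4]] := place_all (P := q) (g := g) (Y := Y) (X := X0) (F := q) isT hu hsz
   (fun a b _ _ => erefl) (fun a n _ _ => erefl) hgY.
set q' := fun t => if (i <= t) && (t <= j) then F' t else q t.
have hq'F : forall t, i.-1 <= t -> t <= j.+1 -> q' t = F' t.
  move=> t h1 h2; rewrite /q'; case: ifP => // hn.
  have : t \in X0 by rewrite !inE; apply/orP; move: hn => /negbT; rewrite negb_and -!ltnNge; lia.
  by move=> /hF1 ->.
have hq'q : forall t, t < i \/ j < t -> q' t = q t.
  move=> t ht; rewrite /q'; case: ifP => // /andP [h1 h2]; lia.
exists q'; split.
- split.
  + by rewrite hq'q ?hq0 //; left.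
  + by rewrite hq'q ?hql //; right.
  + move=> t ht.
    have [hin|hout] := boolP ((i.-1 <= t) && (t <= j)).
    * move/andP: hin => [h1 h2].
      rewrite !hq'F //; try lia.
      rewrite hF2 ?hmem; try (apply/andP; lia).
      by apply: hqlev.
    * rewrite !hq'q; try lia; first by apply: hqlev.
  + move=> t ht.
    have [hin|hout] := boolP ((i <= t) && (t <= j)).
    * move/andP: hin => [h1 h2].
      rewrite hq'F; try lia.
      have := hF3 t 0; rewrite hmem /= => /(_ ltac:(apply/andP; lia) (leq0n _)) ->.
      by apply: hqphi.
    * by rewrite hq'q ?hqphi //; lia.
- exact: hq'q.
- move=> t h1 h2; rewrite hq'F; try lia.
  by apply: hF4; rewrite mem_iota; lia.
Qed.

Lemma guide (q0 : nat -> G) l : 0 < l -> l < K ->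
  exists a, a < l /\ exists q, [/\ Inv q0 q l,
    forall t, 0 < t -> t <= a -> RA (lev (q0 t.-1) (q0 t)) (q t)
  & forall t, a < t -> t < l -> RA (lev (q0 t) (q0 t.+1)) (q t)].
Proof.
move=> hl hlK.
set L := fun t => lev (q0 t) (q0 t.+1).
have hLd : forall t, L t <= d by move=> t; apply: lev_le.
have [a ha hamin] := seq_argmax (fun t => d - L t) (s := iota 0 l) ltac:(by rewrite -size_eq0 size_iota -lt0n).
rewrite mem_iota /= add0n in ha.
have hmin : forall s, s < l -> L a <= L s.
  move=> s hs; have := hamin s; rewrite mem_iota /= add0n => /(_ hs).
  have := hLd s; have := hLd a; lia.
exists a; split => //.
have Inv0 : Inv q0 q0 l by [].
have Fw : forall n, n <= a -> exists q, Inv q0 q l /\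
    forall t, 0 < t -> t <= n -> RA (L t.-1) (q t).
  elim => [|n IH] hn; first by exists q0; split => // t; lia.
  have [q [hq hqR]] := IH (ltnW hn).
  have hex : exists j, (n.+1 <= j) && (L j <= L n) by exists a; rewrite hn hmin //; lia.
  case: (ex_minnP hex) => j /andP [hj1 hj2] hjmin.
  have hja : j <= a by apply: hjmin; rewrite hn hmin //; lia.
  have [_ _ hqlev _] := hq.
  have c1 : lev (q n.+1.-1) (q n.+1) <= L n by rewrite /= hqlev //; lia.
  have c2 : lev (q j) (q j.+1) <= L n by rewrite hqlev //; lia.
  have c3 : forall s, n.+1 <= s -> s < j -> L n < lev (q s) (q s.+1).
    move=> s h1 h2; rewrite hqlev; last by lia.
    rewrite ltnNge; apply/negP => h; have := hjmin s; rewrite h1 h => /(_ isT); lia.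
  have c5 : j < l by lia.
  have [q' [hq' hq'eq hq'R]] := seg_raise hlK hq (ltn0Sn _) hj1 c5 c1 c2 c3.
  exists q'; split => // t h1 h2.
  have [e|hlt] := eqVneq t n.+1; first by rewrite e; apply: hq'R.
  rewrite hq'eq; last by left; lia.
  apply: hqR => //; lia.
have Bw : forall n, n <= l.-1 - a -> exists q, [/\ Inv q0 q l,
    forall t, 0 < t -> t <= a -> RA (L t.-1) (q t)
  & forall t, l.-1 - n < t -> t < l -> RA (L t) (q t)].
  elim => [|n IH] hn.
    have [q [hq hqR]] := Fw a (leqnn a).
    by exists q; split => // t; lia.
  have [q [hq hqF hqB]] := IH (ltnW hn).
  set k := l.-1 - n.
  have hka : a < k by rewrite /k; lia.
  have hex : exists u, [&& 0 < u, u <= k & L (k - u) <= L k].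
    exists (k - a); apply/and3P; split; try lia.
    have -> : k - (k - a) = a by lia.
    by apply: hmin; lia.
  case: (ex_minnP hex) => u /and3P [hu1 hu2 hu3] humin.
  have hua : u <= k - a.
    apply: humin; apply/and3P; split; try lia.
    have -> : k - (k - a) = a by lia.
    by apply: hmin; lia.
  have [_ _ hqlev _] := hq.
  have c1 : lev (q (k - u).+1.-1) (q (k - u).+1) <= L k by rewrite /= hqlev //; lia.
  have c2 : lev (q k) (q k.+1) <= L k by rewrite hqlev //; rewrite /k; lia.
  have c3 : forall s, (k - u).+1 <= s -> s < k -> L k < lev (q s) (q s.+1).
    move=> s h1 h2; rewrite hqlev; last by rewrite /k in h2 *; lia.
    rewrite ltnNge; apply/negP => h.
    have := humin (k - s).
    have -> : k - (k - s) = s by lia.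
    have hh : [&& 0 < k - s, k - s <= k & L s <= L k] by apply/and3P; split => //; lia.
    move=> /(_ hh); lia.
  have c4 : (k - u).+1 <= k by lia.
  have c5 : k < l by rewrite /k; lia.
  have [q' [hq' hq'eq hq'R]] := seg_raise hlK hq (ltn0Sn _) c4 c5 c1 c2 c3.
  exists q'; split => //.
  - move=> t h1 h2; rewrite hq'eq; last by left; lia.
    by apply: hqF.
  - move=> t h1 h2.
    have [e|hne] := eqVneq t k; first by rewrite e; apply: hq'R => //; lia.
    rewrite hq'eq; last by right; rewrite /k in hne *; lia.
    apply: hqB => //; rewrite /k in hne *; lia.
have [q [hq hqF hqB]] := Bw (l.-1 - a) (leqnn _).
exists q; split => //; first by move=> t h1 h2; have := hqF t h1 h2; rewrite /L prednK.
move=> t h1 h2; apply: hqB => //; lia.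
Qed.

Definition Hrel : rel G := fun w x =>
  gadj w x && [forall i : 'I_d.+1, (lev w x < i) ==> isrep i x].

Lemma Hrel_intro w x : gadj w x -> RA (lev w x) x -> Hrel w x.
Proof.
move=> h1 h2; rewrite /Hrel h1 /=; apply/forallP => i; apply/implyP => hi.
by apply: h2 => //; rewrite -ltnS.
Qed.

Lemma ball_path n : forall (f : nat -> G), (forall t, t < n -> Hrel (f t) (f t.+1)) ->
  in_ball Hrel (f 0) n (f n).
Proof.
elim: n => [|n IH] f hf; first by exists [::].
have [p [hp1 [hp2 hp3]]] := IH (fun t => f t.+1) (fun t ht => hf t.+1 ht).
exists (f 1 :: p); split => //=; first by rewrite hp2 hf.
Qed.

Lemma walk_adj (q0 q : nat -> G) l : Inv q0 q l -> (forall t, t < l -> gadj (q0 t) (q0 t.+1)) ->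
  forall t, t < l -> gadj (q t) (q t.+1).
Proof.
move=> [_ _ hlev hphi] hadj t ht.
have hne0 : q0 t != q0 t.+1.
  apply/negP => /eqP he; have := hadj t ht; by rewrite he (gadj_irr (g := G)).
have hne : q t != q t.+1.
  apply/negP => /eqP he; have := lev_neq hne0; by rewrite -hlev // he lev_refl ltnn.
by rewrite adjE // hlev // hphi ?(ltnW ht) // hphi // -adjE // hadj.
Qed.

Lemma wgs r : K = r.+2 -> weak_guidance_system r Hrel.
Proof.
move=> hK; split; first by move=> u v /andP [].
move=> u v l huv hlr [[p [hsz [hp hlast]]] hmin].
have hsp : size p = l by apply/eqP; rewrite eqn_leq hsz hmin //; exists p.
set q0 := fun t => nth u (u :: p) t.
have hq00 : q0 0 = u by [].
have hq0l : q0 l = v by rewrite /q0 -hsp -last_nth.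
have hl : 0 < l.
  rewrite lt0n; apply/negP => /eqP hl0; move: hsp; rewrite hl0 => /size0nil hp0.
  by move: hlast; rewrite hp0 /= => he; rewrite he eqxx in huv.
have hadj0 : forall t, t < l -> gadj (q0 t) (q0 t.+1).
  move=> t ht; move/(pathP u): hp => /(_ t); rewrite hsp => /(_ ht).
  by rewrite /q0.
have [a [hal [q [hq hqF hqB]]]] := guide q0 hl ltac:(lia).
have hadj := walk_adj hq hadj0.
have [hq0 hql hqlev _] := hq.
exists a, (l.-1 - a); split; first by lia.
exists (q a), (q a.+1); split; [|split; [|by apply: hadj]].
- rewrite -hq00 -hq0; apply: ball_path => t ht.
  apply: Hrel_intro; first by apply: hadj; lia.
  by rewrite hqlev; [apply: (hqF t.+1) | lia]; lia.
- have hb := @ball_path (l.-1 - a) (fun t => q (l - t)).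
  have e : l - (l.-1 - a) = a.+1 by lia.
  rewrite /= subn0 e hql hq0l in hb; apply: hb => t ht.
  have e1 : l - t = (l - t.+1).+1 by lia.
  rewrite e1; apply: Hrel_intro.
    by rewrite (gadj_sym (g := G)); apply: hadj; lia.
  rewrite lev_sym hqlev; last by lia.
  by apply: hqB; lia.
Qed.

Definition Nty := \max_(n < d.+1) #|Ty m K n|.
Definition cst := d.+1 * (Nty.+1 * K.+1) ^ d.+1.

Lemma outdeg : max_outdeg_le Hrel cst.
Proof.
move=> u.
pose code (x : G) : {ffun 'I_d.+1 -> 'I_Nty.+1 * 'I_K.+1} :=
  [ffun i : 'I_d.+1 => (inord (enum_rank (tyn (d - i) x)), inord (index (lab i x) (sib x (tyn (d - i) x))))].
pose f (x : G) : 'I_d.+1 * {ffun 'I_d.+1 -> 'I_Nty.+1 * 'I_K.+1} := (@Ordinal d.+1 (lev u x) (lev_le u x), code x).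
have := @leq_card_in _ _ f [set v | Hrel u v].
rewrite card_prod card_ord card_ffun card_prod !card_ord /cst; apply.
move=> x y; rewrite !inE => /andP [_ /forallP hx] /andP [_ /forallP hy] [hlev hcode].
have hlab : forall i, i <= d -> lab i x = lab i y.
  elim => [|i IH] hi; first by apply: lab0.
  have IH' := IH (ltnW hi).
  have [hle|hgt] := leqP i.+1 (lev u x).
    rewrite -(lev_geP hi hle); apply: lev_geP => //; by rewrite -hlev.
  have rx := implyP (hx (Ordinal (hi : i.+1 < d.+1))) hgt.
  have ry := implyP (hy (Ordinal (hi : i.+1 < d.+1))) (ltac:(by rewrite -hlev)).
  have := congr1 (fun F : {ffun 'I_d.+1 -> 'I_Nty.+1 * 'I_K.+1} => F (Ordinal (hi : i.+1 < d.+1))) hcode.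
  rewrite /code !ffunE /= => [[e1 e2]].
  have hN : forall z : G, enum_rank (tyn (d - i.+1) z) < Nty.+1.
    move=> z; apply: leq_trans (ltn_ord _) _; apply: leq_trans (leqnSn _).
    by apply: (@leq_bigmax _ (fun n : 'I_d.+1 => #|Ty m K n|) (Ordinal (leq_subr i.+1 d : d - i.+1 < d.+1))).
  have et : tyn (d - i.+1) x = tyn (d - i.+1) y.
    apply: enum_rank_inj; apply: ord_inj.
    by have := congr1 (@nat_of_ord _) e1; rewrite !inordK ?hN.
  move: rx ry e2; rewrite /isrep et => rx ry e2.
  have es : sib x (tyn (d - i.+1) y) = sib y (tyn (d - i.+1) y).
    apply: sib_cls; have -> : d - (d - i.+1).+1 = i by lia.
    exact: IH'.
  rewrite es in rx e2.
  have := congr1 (@nat_of_ord _) e2; rewrite !inordK; try by apply: ltnW.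
  apply: index_inj; first exact: 0.
  + have := @mem_sib (d - i.+1) x y (tyn (d - i.+1) y).
    have -> : d - (d - i.+1) = i.+1 by lia.
    have -> : d - (d - i.+1).+1 = i by lia.
    by apply.
  + have := @mem_sib (d - i.+1) y y (tyn (d - i.+1) y).
    have -> : d - (d - i.+1) = i.+1 by lia.
    by apply.
by apply: labd; apply: hlab.
Qed.

End Model.

Theorem lemma8 (C : graph -> Prop) :
  bounded_shrub_depth C ->
  forall r : nat, 0 < r ->
  exists c : nat, 0 < c /\
    forall G : graph, C G ->
      exists H : rel G, weak_guidance_system r H /\ max_outdeg_le H c.
Proof.
move=> [d [hd [m [hm hC]]]] r hr.
exists (cst d m r.+2); split; first by rewrite /cst muln_gt0 expn_gt0.
move=> G /hC [lab [phi [S TM]]].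
exists (@Hrel G d m r.+2 lab phi); split.
- by apply: (@wgs G d m r.+2 lab phi S TM (ltn0Sn _) r).
- by apply: (@outdeg G d m r.+2 lab phi S TM).
Qed.
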